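(* Let $\Delta$ be a $k$-shellable simplicial complex and $\sigma$ a face of $\Delta$. Then $\operatorname{lk}_\Delta(\sigma)$ is $k$-shellable.
   Context: $\operatorname{lk}_\Delta(\sigma)=\{G\in\Delta: G\cap\sigma=\emptyset,\ G\cup\sigma\in\Delta\}$. $\langle F_1,\ldots,F_s\rangle$ denotes the simplicial complex with facets $F_1,\dots,F_s$. A simplicial complex $\Gamma$ of dimension $d$ is $k$-shellable ($1\le k\le d+1$) if its facets can be ordered $F_1,\ldots,F_r$ such that for every $j=2,\ldots,r$, $\Gamma_j=\langle F_j\rangle\cap\langle F_1,\ldots,F_{j-1}\rangle$ satisfies (i) $\Gamma_j$ is generated by a nonempty set of faces of $\langle F_j\rangle$ of dimension $|F_j|-k-1$; (ii) if $\Gamma_j$ has more than one facet, then for every two distinct facets $\sigma',\tau'$ of $\Gamma_j$, $F_j\subseteq\sigma'\cup\tau'$. *)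

(* Defs.v *)
From mathcomp Require Import all_boot.
Set Implicit Arguments. Unset Strict Implicit. Unset Printing Implicit Defensive.

Section SC.
Variable T : finType.

Definition is_complex (D : {set {set T}}) : Prop :=
  forall F G : {set T}, F \in D -> G \subset F -> G \in D.

Definition facets (D : {set {set T}}) : {set {set T}} :=
  [set F in D | [forall G in D, (F \subset G) ==> (G == F)]].

Definition gen (S : {set {set T}}) : {set {set T}} :=
  [set G : {set T} | [exists H in S, G \subset H]].

Definition link (D : {set {set T}}) (sigma : {set T}) : {set {set T}} :=
  [set G in D | [disjoint G & sigma] && (G :|: sigma \in D)].

(* k-shellability (the range restriction k <= d+1 is not imposed).
   The facet ordering F_1,...,F_r is the duplicate-free list s of all facets;
   F_j is (nth set0 s j) with 0-based j, so "j = 2..r" is "0 < j < size s". *)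
Definition k_shellable (D : {set {set T}}) (k : nat) : Prop :=
  1 <= k /\
  exists s : seq {set T},
    uniq s /\ (forall F, (F \in s) = (F \in facets D)) /\
    forall j, 0 < j < size s ->
      let Fj := nth set0 s j in
      let Gam := gen [set Fj] :&: gen [set F in take j s] in
      (exists S : {set {set T}},
          S != set0 /\ S \subset powerset Fj /\
          (forall H, H \in S -> #|H| + k = #|Fj|) /\ Gam = gen S) /\
      (1 < #|facets Gam| ->
         forall a b, a \in facets Gam -> b \in facets Gam -> a != b ->
           Fj \subset a :|: b).
End SC.

(* Main.v *)
Require Import Defs.
From mathcomp Require Import all_boot zify.
Set Implicit Arguments. Unset Strict Implicit. Unset Printing Implicit Defensive.

Section L.
Variable T : finType.
Implicit Types (C S : {set {set T}}) (A B F G H sigma : {set T}).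

Lemma disjP A B : reflect (forall x, x \in A -> x \notin B) [disjoint A & B].
Proof.
rewrite disjoints_subset; apply: (iffP subsetP) => H x /H; by rewrite inE.
Qed.

Lemma in_gen S G : (G \in gen S) = [exists H in S, G \subset H].
Proof. by rewrite inE. Qed.

Lemma in_gen1 A G : (G \in gen [set A]) = (G \subset A).
Proof.
rewrite in_gen; apply/existsP/idP => [[H /andP[]]|sGA].
  by rewrite inE => /eqP->.
by exists A; rewrite inE eqxx.
Qed.

Lemma gen_complex S : is_complex (gen S).
Proof.
move=> F G; rewrite !in_gen => /existsP[H /andP[HS sFH]] sGF.
by apply/existsP; exists H; rewrite HS (subset_trans sGF sFH).
Qed.

Lemma complexI C1 C2 : is_complex C1 -> is_complex C2 -> is_complex (C1 :&: C2).
Proof.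
move=> h1 h2 F G; rewrite !inE => /andP[a b] s.
by rewrite (h1 _ _ a s) (h2 _ _ b s).
Qed.

Lemma exists_facet C F : F \in C -> exists2 G, G \in facets C & F \subset G.
Proof.
move=> FC.
have [G /maxsetP [/andP [GC sFG] mG]] :=
  ex_maxset (P := fun G => (G \in C) && (F \subset G)) (ex_intro _ F (introT andP (conj FC (subxx F)))).
exists G => //; rewrite inE GC /=; apply/forallP => H; apply/implyP => HC.
apply/implyP => sGH; apply/eqP; apply: mG => //.
by rewrite HC (subset_trans sFG sGH).
Qed.

Lemma DUK A sigma : [disjoint A & sigma] -> (A :|: sigma) :\: sigma = A.
Proof.
move/disjP=> d; apply/setP => x; rewrite !inE.
case xs: (x \in sigma); last by rewrite orbF.
by apply/esym/negbTE; apply/negP => /d; rewrite xs.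
Qed.

Lemma DKU A sigma : sigma \subset A -> (A :\: sigma) :|: sigma = A.
Proof.
move/subsetP=> s; apply/setP => x; rewrite !inE.
by case: (boolP (x \in sigma)) => xs /=; [rewrite s | rewrite orbF].
Qed.

Lemma D_disj A sigma : [disjoint A :\: sigma & sigma].
Proof. by apply/disjP => x; rewrite inE => /andP[]. Qed.

Lemma sub_D G A sigma : [disjoint G & sigma] -> (G \subset A :\: sigma) = (G :|: sigma \subset A :|: sigma).
Proof.
move/disjP=> d; apply/subsetP/subsetP => h x.
  rewrite !inE => /orP[/h|->]; last by rewrite orbT.
  by rewrite inE => /andP[_ ->].
move=> xG; have := h x; rewrite !inE xG /= => /(_ isT).
by rewrite (negbTE (d _ xG)) orbF => ->.
Qed.

Lemma sub_D2 G A sigma : [disjoint G & sigma] -> sigma \subset A ->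
  (G \subset A :\: sigma) = (G :|: sigma \subset A).
Proof. by move=> d sA; rewrite sub_D // (setUidPl sA). Qed.

Lemma facets_link C sigma : is_complex C ->
  facets (link C sigma) = [set F :\: sigma | F in [set F in facets C | sigma \subset F]].
Proof.
move=> cC; apply/setP => G; apply/idP/idP.
  rewrite !inE => /andP[/and3P[GC dG GsC] /forallP mG].
  have [F FC sF] := exists_facet GsC.
  apply/imsetP; exists F.
    by rewrite inE FC (subset_trans (subsetUr _ _) sF).
  have FC' : F \in C by move: FC; rewrite inE => /andP[].
  have sigF : sigma \subset F by apply: subset_trans (subsetUr _ _) sF.
  apply/eqP; rewrite eq_sym; have := mG (F :\: sigma); rewrite !inE.
  rewrite (cC _ _ FC' (subsetDl _ _)) D_disj DKU // FC' /=.
  by move/implyP; apply; rewrite sub_D // (setUidPl sigF).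
case/imsetP => F; rewrite inE => /andP[FC sigF] ->.
move: FC; rewrite inE => /andP[FC /forallP mF].
rewrite !inE (cC _ _ FC (subsetDl _ _)) D_disj DKU // FC /=.
apply/forallP => H; apply/implyP; rewrite inE => /and3P[HC dH HsC].
apply/implyP => sFH.
have := mF (H :|: sigma); rewrite HsC /=.
have -> : F \subset H :|: sigma by rewrite -{1}(DKU sigF) setSU.
move=> /eqP e.
by rewrite -(DUK dH) e.
Qed.


Lemma in_link C sigma G : (G \in link C sigma) = [&& G \in C, [disjoint G & sigma] & G :|: sigma \in C].
Proof. by rewrite inE. Qed.

Lemma in_genS (p : seq {set T}) G : (G \in gen [set x : {set T} in p]) = has (fun x : {set T} => G \subset x) p.
Proof.
rewrite in_gen; apply/existsP/hasP => [[x /andP[]]|[x xp sGx]].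
  by rewrite inE => xp sGx; exists x.
by exists x; rewrite inE xp.
Qed.

Lemma gam_link F (p : seq {set T}) sigma : sigma \subset F ->
  gen [set F :\: sigma] :&: gen [set x : {set T} in [seq y :\: sigma | y : {set T} <- p & sigma \subset y]]
  = link (gen [set F] :&: gen [set x : {set T} in p]) sigma.
Proof.
move=> sigF; apply/setP => G; rewrite in_link !in_setI !in_gen1 !in_genS.
apply/idP/idP.
  case/andP=> sGF /hasP[x' /mapP[y]]; rewrite mem_filter => /andP[sigy yp] -> sGy.
  have dG : [disjoint G & sigma].
    apply/disjP => z /(subsetP sGF); by rewrite inE => /andP[].
  have h1 : G :|: sigma \subset F by rewrite -sub_D2.
  have h3 : G :|: sigma \subset y by rewrite -sub_D2.
  rewrite dG h1 (subset_trans (subsetUl G sigma) h1) /=.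
  by apply/andP; split; apply/hasP; exists y => //; apply: subset_trans h3; apply: subsetUl.
case/and3P=> _ dG /andP[sGF /hasP[y yp sGy]].
have sigy : sigma \subset y by apply: subset_trans sGy; apply: subsetUr.
rewrite sub_D2 // sGF /=; apply/hasP; exists (y :\: sigma).
  by apply/mapP; exists y => //; rewrite mem_filter sigy.
by rewrite sub_D2.
Qed.


Definition Cond (k : nat) F (p : seq {set T}) : Prop :=
  let Gam := gen [set F] :&: gen [set x : {set T} in p] in
  (exists S : {set {set T}}, S != set0 /\ S \subset powerset F /\
      (forall H, H \in S -> #|H| + k = #|F|) /\ Gam = gen S) /\
  (1 < #|facets Gam| ->
     forall a b, a \in facets Gam -> b \in facets Gam -> a != b -> F \subset a :|: b).

Lemma link_cond k F (p p' : seq {set T}) sigma : sigma \subset F ->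
  p' = [seq y :\: sigma | y : {set T} <- p & sigma \subset y] ->
  Cond k F p -> p' != [::] -> Cond k (F :\: sigma) p'.
Proof.
move=> sigF Ep [[S [S0 [SP [Sk GS]]]] c2] ne.
have [x' x'p] : exists x', x' \in p' by case: (p') ne => // x' l _; exists x'; rewrite inE eqxx.
subst p'; rewrite /Cond gam_link //; cbv zeta.
set Gam := gen [set F] :&: gen _ in GS c2 *.
have cG : is_complex Gam := complexI (@gen_complex _) (@gen_complex _).
split.
  have h0 : set0 \in link Gam sigma.
    rewrite -gam_link // in_setI in_gen1 sub0set in_genS; apply/hasP; exists x' => //.
    exact: sub0set.
  move: (h0); rewrite in_link set0U => /and3P[_ _]; rewrite GS in_gen => /existsP[H0 /andP[H0S sH0]].
  exists [set H :\: sigma | H in [set H in S | sigma \subset H]].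
  split.
    apply/set0Pn; exists (H0 :\: sigma); apply/imsetP; exists H0 => //.
    by rewrite inE H0S.
  split.
    apply/subsetP => H1 /imsetP[H]; rewrite inE => /andP[HS sH] ->.
    rewrite powersetE; apply: setSD; rewrite -powersetE; exact: (subsetP SP).
  split.
    move=> H1 /imsetP[H]; rewrite inE => /andP[HS sH] ->.
    have e1 := cardsID sigma H; rewrite (setIidPr sH) in e1.
    have e2 := cardsID sigma F; rewrite (setIidPr sigF) in e2.
    have := Sk H HS; lia.
  apply/setP => G; rewrite in_link !in_gen; apply/idP/idP.
    case/and3P=> _ dG /existsP[H /andP[HS sGH]].
    have sH : sigma \subset H by apply: subset_trans sGH; apply: subsetUr.
    apply/existsP; exists (H :\: sigma); rewrite sub_D2 // sGH andbT.
    by apply/imsetP; exists H => //; rewrite inE HS.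
  case/existsP=> H1 /andP[/imsetP[H]]; rewrite inE => /andP[HS sH] -> sG.
  have dG : [disjoint G & sigma].
    by apply/disjP => z /(subsetP sG); rewrite inE => /andP[].
  rewrite dG; apply/andP; split; apply/existsP; exists H; rewrite HS //=.
    by apply: subset_trans sG (subsetDl _ _).
  by rewrite -sub_D2.
rewrite facets_link //.
move=> gt a1 b1 /imsetP[a]; rewrite inE => /andP[af sa] -> /imsetP[b]; rewrite inE => /andP[bf sb] -> neq.
have gt' : 1 < #|facets Gam|.
  apply: leq_trans gt _; apply: leq_trans (leq_imset_card _ _) _.
  by apply: subset_leq_card; apply/subsetP => x; rewrite inE => /andP[].
have ab : a != b by apply: contraNneq neq => ->.
by rewrite -setDUl; apply: setSD; apply: c2.
Qed.


Lemma split_mf (f : {set T} -> {set T}) (P : pred {set T}) l p' x' q' :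
  [seq f x | x <- l & P x] = p' ++ x' :: q' ->
  exists p x q, [/\ l = p ++ x :: q, P x, f x = x' & [seq f y | y <- p & P y] = p'].
Proof.
elim: l p' => [|a l IH] p' /=; first by case: p'.
case Pa: (P a) => /=.
  case: p' => [|y p''] /= [e1 e2].
    by exists [::], a, l; split.
  have [p [x [q [-> Px fx ep]]]] := IH _ e2.
  by exists (a :: p), x, q; split => //=; rewrite Pa /= ep e1.
move=> e; have [p [x [q [-> Px fx ep]]]] := IH _ e.
by exists (a :: p), x, q; split => //=; rewrite Pa.
Qed.

Lemma shell_iff k (s : seq {set T}) :
 (forall j, 0 < j < size s ->
      let Fj := nth set0 s j in
      let Gam := gen [set Fj] :&: gen [set F in take j s] in
      (exists S : {set {set T}},
          S != set0 /\ S \subset powerset Fj /\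
          (forall H, H \in S -> #|H| + k = #|Fj|) /\ Gam = gen S) /\
      (1 < #|facets Gam| ->
         forall a b, a \in facets Gam -> b \in facets Gam -> a != b ->
           Fj \subset a :|: b))
 <-> (forall p F q, s = p ++ F :: q -> p != [::] -> Cond k F p).
Proof.
split.
  move=> h p F q e pn; rewrite e in h; have := h (size p).
  rewrite size_cat /= nth_cat ltnn subnn take_size_cat //; apply.
  by rewrite lt0n size_eq0 pn /= -addSnnS leq_addr.
move=> h j /andP[j0 js].
have e : s = take j s ++ nth set0 s j :: drop j.+1 s by rewrite -drop_nth // cat_take_drop.
apply: (h _ _ _ e); by rewrite -size_eq0 size_take js -lt0n.
Qed.

End L.

Theorem theorem2p6 (T : finType) (D : {set {set T}}) (k : nat) (sigma : {set T}) :
  is_complex D -> k_shellable D k -> sigma \in D ->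
  k_shellable (link D sigma) k.
Proof.
move=> cD [k1 [s [us [ms hs]]]] sD; split => //.
exists [seq F :\: sigma | F : {set T} <- s & sigma \subset F].
split.
  rewrite map_inj_in_uniq ?filter_uniq // => a b; rewrite !mem_filter.
  by move=> /andP[sa _] /andP[sb _] e; rewrite -(DKU sa) e DKU.
split.
  move=> G; rewrite facets_link //; apply/mapP/imsetP => [[F]|[F]].
    by rewrite mem_filter => /andP[sF Fs] ->; exists F => //; rewrite inE -ms Fs sF.
  by rewrite inE -ms => /andP[Fs sF] ->; exists F => //; rewrite mem_filter Fs sF.
have hs' := (shell_iff k s).1 hs.
apply/(shell_iff k); move=> p' F' q' e pn.
have [p [F [q [e1 PF fF ep]]]] := split_mf e.
subst F'; apply: (link_cond PF (esym ep) _ pn).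
by apply: (hs' _ _ _ e1); move: pn; rewrite -ep; case: (p).
Qed.
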